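(* Consider the heteroscedastic linear model $y(i,k)=\tau_i+\mu+\mathbf g^T(k)\beta+\varepsilon(i,k)$ with treatments $i\in\{1,\ldots,v_1\}$, covariate indices $k\in\{1,\ldots,d\}$, known regressors $\mathbf g(k)\in\mathbb R^{v_2}$, uncorrelated mean-zero errors with $\mathrm{Var}(\varepsilon(i,k))=\sigma^2/\lambda_i$, $\lambda_i>0$ known. Let $\Phi$ be an eigenvalue-based information function and let $\xi^*=w^*\otimes\alpha^*$ be a product design that is $\Phi$-optimal for $\mathbf A^T\theta$. Let $\xi$ be a design satisfying $\mathbf M(\xi)\mathbf G\mathbf A=\mathbf A$, where $$\mathbf G=\mathrm{diag}\Big(\mathbf M_1^{-1}(w^* ),\ \big(\textstyle\sum_i\lambda_iw_i^*\big)^{-1}\mathbf M_2^-(\alpha^* )\Big)$$ and $\mathbf M_2^-(\alpha^* )$ is any generalized inverse of $\mathbf M_2(\alpha^* )$. Then $\xi$ is $\Phi$-optimal for $\mathbf A^T\theta$. In particular, let $\mathbf S^-(\alpha^* )$ be a generalized inverse of $\mathbf S(\alpha^* )$ and let $\xi$ be a design with marginal treatment design $w$ satisfying (a) $w_i=w_i^*$ for $i=1,\ldots,v_1$; (b) $\Big[\frac{1}{w_1^*}\sum_{k=1}^d\xi(1,k)\mathbf g(k),\ldots,\frac{1}{w_{v_1}^*}\sum_{k=1}^d\xi(v_1,k)\mathbf g(k)\Big]\mathbf Q_1=\mathbf 0_{v_2\times s_1}$; (c) the $v_1\times v_2$ matrix whose $i$th row is $\sum_k(\xi(i,k)-w_i^*\alpha_k^*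 )\mathbf g^T(k)$, multiplied on the right by $\mathbf S^-(\alpha^* )\mathbf K$, equals $\mathbf 0_{v_1\times s_2}$; (d) $\big(\sum_{i=1}^{v_1}\lambda_iw_i^*\big)^{-1}\Big(\sum_{i,k}\lambda_i\xi(i,k)\mathbf g(k)\mathbf g^T(k)-\big(\sum_{i,k}\lambda_i\xi(i,k)\mathbf g(k)\big)\sum_{k=1}^{d}\alpha_k^*\mathbf g^T(k)\Big)\mathbf S^-(\alpha^* )\mathbf K=\mathbf K$. Then $\xi$ is $\Phi$-optimal for $\mathbf A^T\theta$.
   Context: Write $\theta=(\tau^T,\mu,\beta^T)^T$, $\mathbf h(k)=(1,\mathbf g^T(k))^T$, $\mathbf f(i,k)=(\mathbf e_i^T,1,\mathbf g^T(k))^T$. A design $\xi$ is a nonnegative function on $\{1,\ldots,v_1\}\times\{1,\ldots,d\}$ summing to one, with moment matrix $\mathbf M(\xi)=\sum_{i,k}\xi(i,k)\lambda_i\mathbf f(i,k)\mathbf f^T(i,k)$; its marginal treatment design is $w_i=\sum_k\xi(i,k)$ and marginal covariate design $\alpha_k=\sum_i\xi(i,k)$. A product design is $(w\otimes\alpha)(i,k)=w_i\alpha_k$ for probability vectors $w\in\mathbb R^{v_1}$, $\alpha\in\mathbb R^d$. Let $\mathbf Q_1\in\mathbb R^{v_1\times s_1}$ have full column rank, satisfy $\mathbf Q_1^T\mathbf 1_{v_1}=\mathbf 0$ and have no zero row; let $\mathbf K\in\mathbb R^{v_2\times s_2}$ have full column rank; $\mathbf Q_2=(\mathbf 0_{s_2},\mathbf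 K^T)^T$, $\mathbf A=\mathrm{diag}(\mathbf Q_1,\mathbf Q_2)$. A design is feasible for $\mathbf A^T\theta$ if $\mathcal C(\mathbf A)\subseteq\mathcal C(\mathbf M(\xi))$, with information matrix $\mathbf N_{\mathbf A}(\xi)=(\mathbf A^T\mathbf M^-(\xi)\mathbf A)^{-1}$; it is $\Phi$-optimal if feasible and maximizing $\Phi(\mathbf N_{\mathbf A}(\xi))$ over feasible designs. Notation: $\mathbf M_1(w)=\mathrm{diag}(\lambda_1w_1,\ldots,\lambda_{v_1}w_{v_1})$; $\mathbf M_2(\alpha)=\sum_k\alpha_k\mathbf h(k)\mathbf h^T(k)$; $\mathbf S(\alpha)=\sum_k\alpha_k\mathbf g(k)\mathbf g^T(k)-(\sum_k\alpha_k\mathbf g(k))(\sum_k\alpha_k\mathbf g(k))^T$. An information function is a positively homogeneous, concave, nonnegative, nonconstant, upper semicontinuous function on nonnegative definite $(s_1+s_2)\times(s_1+s_2)$ matrices; it is eigenvalue-based if it depends only on the eigenvalues of its argument. *)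

(* Defs.v *)
From HB Require Import structures.
From mathcomp Require Import all_boot all_order all_algebra.
From mathcomp Require Import reals.
Set Implicit Arguments. Unset Strict Implicit. Unset Printing Implicit Defensive.
Import Order.TTheory GRing.Theory Num.Theory.
Local Open Scope ring_scope.

Section Defs.
Variable R : realType.

Definition nnd (n : nat) (C : 'M[R]_n) : Prop :=
  C^T = C /\ forall x : 'cV[R]_n, 0 <= (x^T *m C *m x) ord0 ord0.

Definition information_function (n : nat) (Phi : 'M[R]_n -> R) : Prop :=
  [/\
      (forall (c : R) (C : 'M[R]_n), nnd C -> 0 < c -> Phi (c *: C) = c * Phi C),
      (forall (t : R) (C D : 'M[R]_n), nnd C -> nnd D -> 0 <= t -> t <= 1 ->
          t * Phi C + (1 - t) * Phi D <= Phi (t *: C + (1 - t) *: D)),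
      (forall C : 'M[R]_n, nnd C -> 0 <= Phi C),
      (exists C D : 'M[R]_n, [/\ nnd C, nnd D & Phi C <> Phi D]) &
      (forall C : 'M[R]_n, nnd C -> forall e : R, 0 < e ->
         exists2 delta : R, 0 < delta &
           forall D : 'M[R]_n, nnd D -> (forall i j, `|D i j - C i j| < delta) ->
             Phi D < Phi C + e)].

(* depends only on the eigenvalues (with multiplicities), i.e. on the
   characteristic polynomial, of its (symmetric) argument *)
Definition eigenvalue_based (n : nat) (Phi : 'M[R]_n -> R) : Prop :=
  forall C D : 'M[R]_n, nnd C -> nnd D -> char_poly C = char_poly D -> Phi C = Phi D.

Definition ginv (n : nat) (M G : 'M[R]_n) : Prop := M *m G *m M = M.

Definition prob_vec (n : nat) (w : 'I_n -> R) : Prop :=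
  (forall i, 0 <= w i) /\ \sum_(i < n) w i = 1.

Definition design (v1 d : nat) (xi : 'I_v1 -> 'I_d -> R) : Prop :=
  (forall i k, 0 <= xi i k) /\ \sum_(i < v1) \sum_(k < d) xi i k = 1.

Definition prod_design (v1 d : nat) (w : 'I_v1 -> R) (alpha : 'I_d -> R) :
  'I_v1 -> 'I_d -> R := fun i k => w i * alpha k.

Definition marg_treat (v1 d : nat) (xi : 'I_v1 -> 'I_d -> R) (i : 'I_v1) : R :=
  \sum_(k < d) xi i k.

Definition marg_cov (v1 d : nat) (xi : 'I_v1 -> 'I_d -> R) (k : 'I_d) : R :=
  \sum_(i < v1) xi i k.

Definition hvec (v2 d : nat) (g : 'I_d -> 'cV[R]_v2) (k : 'I_d) : 'cV[R]_(1 + v2) :=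
  col_mx (const_mx 1) (g k).

Definition fvec (v1 v2 d : nat) (g : 'I_d -> 'cV[R]_v2) (i : 'I_v1) (k : 'I_d) :
  'cV[R]_(v1 + (1 + v2)) :=
  col_mx (delta_mx i ord0) (hvec g k).

Definition momM (v1 v2 d : nat) (lambda : 'I_v1 -> R) (g : 'I_d -> 'cV[R]_v2)
  (xi : 'I_v1 -> 'I_d -> R) : 'M[R]_(v1 + (1 + v2)) :=
  \sum_(i < v1) \sum_(k < d) (xi i k * lambda i) *: (fvec g i k *m (fvec g i k)^T).

Definition M1 (v1 : nat) (lambda w : 'I_v1 -> R) : 'M[R]_v1 :=
  diag_mx (\row_i (lambda i * w i)).

Definition M2 (v2 d : nat) (g : 'I_d -> 'cV[R]_v2) (alpha : 'I_d -> R) : 'M[R]_(1 + v2) :=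
  \sum_(k < d) alpha k *: (hvec g k *m (hvec g k)^T).

Definition Smat (v2 d : nat) (g : 'I_d -> 'cV[R]_v2) (alpha : 'I_d -> R) : 'M[R]_v2 :=
  \sum_(k < d) alpha k *: (g k *m (g k)^T)
  - (\sum_(k < d) alpha k *: g k) *m (\sum_(k < d) alpha k *: g k)^T.

(* A = diag(Q1, Q2), Q2 = (0_{s2}, K^T)^T *)
Definition Amat (v1 v2 s1 s2 : nat) (Q1 : 'M[R]_(v1, s1)) (K : 'M[R]_(v2, s2)) :
  'M[R]_(v1 + (1 + v2), s1 + s2) :=
  block_mx Q1 0 0 (col_mx (0 : 'M[R]_(1, s2)) K).

(* feasibility: C(A) is contained in C(M(xi)) *)
Definition feasible (v1 v2 d s1 s2 : nat) (lambda : 'I_v1 -> R) (g : 'I_d -> 'cV[R]_v2)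
  (Q1 : 'M[R]_(v1, s1)) (K : 'M[R]_(v2, s2)) (xi : 'I_v1 -> 'I_d -> R) : Prop :=
  ((Amat Q1 K)^T <= (momM lambda g xi)^T)%MS.

(* information matrix N_A(xi) = (A^T M^-(xi) A)^{-1}, with the generalized
   inverse M^- := pinvmx M (any g-inverse gives the same value for feasible xi) *)
Definition info_mx (v1 v2 d s1 s2 : nat) (lambda : 'I_v1 -> R) (g : 'I_d -> 'cV[R]_v2)
  (Q1 : 'M[R]_(v1, s1)) (K : 'M[R]_(v2, s2)) (xi : 'I_v1 -> 'I_d -> R) :
  'M[R]_(s1 + s2) :=
  invmx ((Amat Q1 K)^T *m pinvmx (momM lambda g xi) *m Amat Q1 K).

Definition Phi_optimal (v1 v2 d s1 s2 : nat) (lambda : 'I_v1 -> R) (g : 'I_d -> 'cV[R]_v2)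
  (Q1 : 'M[R]_(v1, s1)) (K : 'M[R]_(v2, s2)) (Phi : 'M[R]_(s1 + s2) -> R)
  (xi : 'I_v1 -> 'I_d -> R) : Prop :=
  [/\ design xi, feasible lambda g Q1 K xi &
      forall xi' : 'I_v1 -> 'I_d -> R, design xi' -> feasible lambda g Q1 K xi' ->
        Phi (info_mx lambda g Q1 K xi') <= Phi (info_mx lambda g Q1 K xi)].

End Defs.

(* Main.v *)
Require Import Defs.
From HB Require Import structures.
From mathcomp Require Import all_boot all_order all_algebra.
From mathcomp Require Import reals.
From mathcomp Require Import ring.
Import Order.TTheory GRing.Theory Num.Theory.
Local Open Scope ring_scope.
Set Implicit Arguments. Unset Strict Implicit. Unset Printing Implicit Defensive.
Lemma sum_col (R : realType) m1 m2 n (I : Type) (r : seq I) (P : pred I)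
  (A : I -> 'M[R]_(m1, n)) (B : I -> 'M[R]_(m2, n)) :
  \sum_(i <- r | P i) col_mx (A i) (B i) =
  col_mx (\sum_(i <- r | P i) A i) (\sum_(i <- r | P i) B i).
Proof.
elim/big_rec3: _ => [|i x y z _ ->]; first by rewrite col_mx0.
by rewrite add_col_mx.
Qed.

Lemma sum_row (R : realType) m n1 n2 (I : Type) (r : seq I) (P : pred I)
  (A : I -> 'M[R]_(m, n1)) (B : I -> 'M[R]_(m, n2)) :
  \sum_(i <- r | P i) row_mx (A i) (B i) =
  row_mx (\sum_(i <- r | P i) A i) (\sum_(i <- r | P i) B i).
Proof.
elim/big_rec3: _ => [|i x y z _ ->]; first by rewrite row_mx0.
by rewrite add_row_mx.
Qed.

Lemma sum_block (R : realType) m1 m2 n1 n2 (I : Type) (r : seq I) (P : pred I)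
  (A : I -> 'M[R]_(m1, n1)) (B : I -> 'M[R]_(m1, n2))
  (C : I -> 'M[R]_(m2, n1)) (D : I -> 'M[R]_(m2, n2)) :
  \sum_(i <- r | P i) block_mx (A i) (B i) (C i) (D i) =
  block_mx (\sum_(i <- r | P i) A i) (\sum_(i <- r | P i) B i)
           (\sum_(i <- r | P i) C i) (\sum_(i <- r | P i) D i).
Proof.
rewrite block_mxEv -!sum_row -sum_col.
by apply: eq_bigr => i _; rewrite block_mxEv.
Qed.

Lemma sum_tr (R : realType) m n (I : Type) (r : seq I) (P : pred I)
  (A : I -> 'M[R]_(m, n)) :
  (\sum_(i <- r | P i) A i)^T = \sum_(i <- r | P i) (A i)^T.
Proof.
apply/matrixP => a b; rewrite !mxE !summxE; apply: eq_bigr => i _; by rewrite mxE.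
Qed.

Lemma trZ (R : realType) m n (c : R) (X : 'M[R]_(m, n)) : (c *: X)^T = c *: X^T.
Proof. by apply/matrixP => a b; rewrite !mxE. Qed.

Lemma const1 (R : realType) : (const_mx 1 : 'M[R]_1) = 1%:M.
Proof. apply/matrixP => i j; rewrite !mxE; have -> : i = j by rewrite [i]ord1 [j]ord1.
by rewrite eqxx. Qed.

Lemma hh (R : realType) v2 d (g : 'I_d -> 'cV[R]_v2) k :
  hvec g k *m (hvec g k)^T = block_mx 1%:M (g k)^T (g k) (g k *m (g k)^T).
Proof. by rewrite /hvec tr_col_mx mul_col_row const1 trmx1 !mul1mx !mulmx1. Qed.

Definition Emat (R : realType) v1 v2 d (lambda : 'I_v1 -> R) (g : 'I_d -> 'cV[R]_v2)
  (xi : 'I_v1 -> 'I_d -> R) : 'M[R]_(v1, 1 + v2) :=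
  \sum_(i < v1) \sum_(k < d) (xi i k * lambda i) *: (delta_mx i 0 *m (hvec g k)^T).

Definition Fmat (R : realType) v1 v2 d (lambda : 'I_v1 -> R) (g : 'I_d -> 'cV[R]_v2)
  (xi : 'I_v1 -> 'I_d -> R) : 'M[R]_(1 + v2) :=
  \sum_(i < v1) \sum_(k < d) (xi i k * lambda i) *: (hvec g k *m (hvec g k)^T).

Lemma momM_block (R : realType) v1 v2 d (lambda : 'I_v1 -> R) (g : 'I_d -> 'cV[R]_v2)
  (xi : 'I_v1 -> 'I_d -> R) :
  momM lambda g xi = block_mx (M1 lambda (marg_treat xi)) (Emat lambda g xi)
     (Emat lambda g xi)^T (Fmat lambda g xi).
Proof.
rewrite /momM.
under eq_bigr => i _ do under eq_bigr => k _ do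
  rewrite /fvec tr_col_mx mul_col_row scale_block_mx.
under eq_bigr => i _ do rewrite sum_block.
rewrite sum_block; congr block_mx.
- apply/matrixP => a b; rewrite /M1 !mxE summxE.
  under eq_bigr => i _ do rewrite summxE.
  rewrite (bigD1 a) //= [X in _ + X]big1 ?addr0; last first.
    move=> i /negPf Hia; apply: big1 => k _.
    by rewrite mxE trmx_delta mul_delta_mx mxE eq_sym Hia mulr0.
  rewrite /marg_treat mulr_sumr.
  have [<-|Hab] := eqVneq a b.
    by rewrite mulr1n; apply: eq_bigr => k _; rewrite mxE trmx_delta mul_delta_mx mxE !eqxx mulr1 mulrC.
  rewrite mulr0n; apply: big1 => k _.
  by rewrite mxE trmx_delta mul_delta_mx mxE eqxx /= (eq_sym b) (negPf Hab) mulr0.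
- rewrite /Emat sum_tr; apply: eq_bigr => i _; rewrite sum_tr; apply: eq_bigr => k _.
  by rewrite trZ trmx_mul trmxK.
Qed.
Lemma momM_sym (R : realType) v1 v2 d (lambda : 'I_v1 -> R) (g : 'I_d -> 'cV[R]_v2)
  (xi : 'I_v1 -> 'I_d -> R) : (momM lambda g xi)^T = momM lambda g xi.
Proof.
rewrite /momM sum_tr; apply: eq_bigr => i _; rewrite sum_tr; apply: eq_bigr => k _.
by rewrite trZ trmx_mul trmxK.
Qed.

Lemma info_eq (R : realType) n p (M : 'M[R]_n) (G : 'M[R]_n) (A : 'M[R]_(n, p)) :
  M^T = M -> M *m G *m A = A -> A^T *m pinvmx M *m A = A^T *m G^T *m A.
Proof.
move=> Ms HA.
have -> : A^T *m pinvmx M *m A = (M *m G *m A)^T *m pinvmx M *m (M *m G *m A) by rewrite HA.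
rewrite !trmx_mul Ms.
have HM : M *m pinvmx M *m M = M by apply: mulmxKpV; exact: submx_refl.
move: (pinvmx M) HM => P HM.
rewrite -!mulmxA (mulmxA M P) (mulmxA (M *m P)) HM.
by rewrite (mulmxA M G A) HA.
Qed.

Lemma feas_of (R : realType) v1 v2 d s1 s2 (lambda : 'I_v1 -> R) (g : 'I_d -> 'cV[R]_v2)
  (Q1 : 'M[R]_(v1, s1)) (K : 'M[R]_(v2, s2)) (xi : 'I_v1 -> 'I_d -> R) G :
  momM lambda g xi *m G *m Amat Q1 K = Amat Q1 K -> feasible lambda g Q1 K xi.
Proof.
move=> HA; rewrite /feasible -HA !trmx_mul momM_sym.
by rewrite mulmxA submxMl.
Qed.

Lemma opt_transfer (R : realType) v1 v2 d s1 s2 (lambda : 'I_v1 -> R) (g : 'I_d -> 'cV[R]_v2)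
  (Q1 : 'M[R]_(v1, s1)) (K : 'M[R]_(v2, s2)) (Phi : 'M[R]_(s1 + s2) -> R)
  (xs xi : 'I_v1 -> 'I_d -> R) G :
  Phi_optimal lambda g Q1 K Phi xs -> design xi ->
  momM lambda g xi *m G *m Amat Q1 K = Amat Q1 K ->
  momM lambda g xs *m G *m Amat Q1 K = Amat Q1 K ->
  Phi_optimal lambda g Q1 K Phi xi.
Proof.
move=> [Ds Fs Os] Dx H1 H2.
have E : info_mx lambda g Q1 K xi = info_mx lambda g Q1 K xs.
  by rewrite /info_mx (info_eq (momM_sym _ _ _) H1) (info_eq (momM_sym _ _ _) H2).
split => //; first exact: feas_of H1.
by move=> xi' D' F'; rewrite E; apply: Os.
Qed.
Lemma M2_sym (R : realType) v2 d (g : 'I_d -> 'cV[R]_v2) (a : 'I_d -> R) :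
  (M2 g a)^T = M2 g a.
Proof. by rewrite /M2 sum_tr; apply: eq_bigr => k _; rewrite trZ trmx_mul trmxK. Qed.

Lemma M2_e1 (R : realType) v2 d (g : 'I_d -> 'cV[R]_v2) (a : 'I_d -> R) :
  M2 g a *m col_mx (1%:M : 'M[R]_1) (0 : 'M[R]_(v2, 1)) = \sum_k a k *: hvec g k.
Proof.
rewrite /M2 mulmx_suml; apply: eq_bigr => k _.
rewrite -scalemxAl -mulmxA /hvec tr_col_mx mul_row_col const1 trmx1 mulmx0 addr0 mulmx1.
by rewrite mulmx1.
Qed.

Lemma m1_D (R : realType) v1 (lambda w : 'I_v1 -> R) :
  \sum_i (lambda i * w i) *: (delta_mx i 0 : 'cV[R]_v1) = M1 lambda w *m const_mx 1.
Proof.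
apply/matrixP => a b; rewrite /M1 mul_diag_mx !mxE summxE (bigD1 a) //= big1 ?addr0.
  by rewrite !mxE !eqxx [b]ord1 eqxx mulr1.
by move=> i /negPf H; rewrite !mxE eq_sym H mulr0.
Qed.

Definition m1v (R : realType) v1 (lambda w : 'I_v1 -> R) : 'cV[R]_v1 :=
  M1 lambda w *m const_mx 1.
Definition m2v (R : realType) v2 d (g : 'I_d -> 'cV[R]_v2) (a : 'I_d -> R) : 'cV[R]_(1 + v2) :=
  \sum_k a k *: hvec g k.

Lemma prod_block (R : realType) v1 v2 d (lambda : 'I_v1 -> R) (g : 'I_d -> 'cV[R]_v2)
  (w : 'I_v1 -> R) (a : 'I_d -> R) :
  \sum_k a k = 1 ->
  momM lambda g (prod_design w a) =
  block_mx (M1 lambda w) (m1v lambda w *m (m2v g a)^T) (m2v g a *m (m1v lambda w)^T)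
     ((\sum_i lambda i * w i) *: M2 g a).
Proof.
move=> Ha.
have HE : Emat lambda g (prod_design w a) = m1v lambda w *m (m2v g a)^T.
  rewrite /Emat /m1v -m1_D mulmx_suml; apply: eq_bigr => i _.
  rewrite /m2v sum_tr mulmx_sumr; apply: eq_bigr => k _.
  by rewrite trZ -scalemxAr -scalemxAl scalerA /prod_design; congr (_ *: _); ring.
rewrite momM_block HE trmx_mul trmxK; congr block_mx.
  apply/matrixP => i j; rewrite /M1 !mxE /marg_treat /prod_design -mulr_sumr Ha mulr1.
  by [].
rewrite /Fmat /M2 scaler_suml; apply: eq_bigr => i _.
rewrite scaler_sumr; apply: eq_bigr => k _.
by rewrite scalerA /prod_design; congr (_ *: _); ring.
Qed.

Lemma feas_decomp (R : realType) v1 v2 d s1 s2 (lambda : 'I_v1 -> R) (g : 'I_d -> 'cV[R]_v2)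
  (Q1 : 'M[R]_(v1, s1)) (K : 'M[R]_(v2, s2)) (xi : 'I_v1 -> 'I_d -> R) :
  feasible lambda g Q1 K xi ->
  exists Y : 'M[R]_(v1 + (1 + v2), s1 + s2), Amat Q1 K = momM lambda g xi *m Y.
Proof.
move/submxP => [X HX]; exists X^T.
by rewrite -(trmxK (Amat Q1 K)) HX trmx_mul trmxK.
Qed.

Lemma wpos (R : realType) v1 v2 d s1 s2 (lambda : 'I_v1 -> R) (g : 'I_d -> 'cV[R]_v2)
  (Q1 : 'M[R]_(v1, s1)) (K : 'M[R]_(v2, s2)) (w : 'I_v1 -> R) (a : 'I_d -> R) :
  (forall i, row i Q1 != 0) -> prob_vec w -> prob_vec a ->
  feasible lambda g Q1 K (prod_design w a) -> forall i, 0 < w i.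
Proof.
move=> Hr [w0 w1] [a0 a1] /feas_decomp [Y HY] i.
rewrite lt_def w0 andbT; apply/negP => /eqP wi0.
move: HY; rewrite (prod_block _ _ _ a1) -(submxK Y) mulmx_block /Amat.
move=> /eq_block_mx [HQ _ _ _].
apply: (negP (Hr i)); apply/eqP/rowP => j.
rewrite !mxE HQ /m1v -!mulmxA -mulmxDr mul_diag_mx !mxE wi0 mulr0 mul0r.
by [].
Qed.

Lemma M1_unit (R : realType) v1 (lambda w : 'I_v1 -> R) :
  (forall i, 0 < lambda i) -> (forall i, 0 < w i) -> M1 lambda w \in unitmx.
Proof.
move=> Hl Hw; rewrite unitmxE /M1 det_diag unitfE prodf_seq_neq0.
by apply/allP => i _ /=; rewrite mxE mulf_neq0 // gt_eqF.
Qed.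

Lemma csum_neq0 (R : realType) v1 (lambda w : 'I_v1 -> R) :
  (forall i, 0 < lambda i) -> prob_vec w -> \sum_i lambda i * w i != 0.
Proof.
move=> Hl [w0 w1]; apply/eqP => /psumr_eq0P H.
have : \sum_i w i = 0.
  apply: big1 => i _.
  have := H (fun j _ => mulr_ge0 (ltW (Hl j)) (w0 j)) i isT.
  by move/eqP; rewrite mulf_eq0 gt_eqF //= => /eqP.
by rewrite w1 => /eqP; rewrite oner_eq0.
Qed.

Lemma prod_GA (R : realType) v1 v2 d s1 s2 (lambda : 'I_v1 -> R) (g : 'I_d -> 'cV[R]_v2)
  (Q1 : 'M[R]_(v1, s1)) (K : 'M[R]_(v2, s2)) (w : 'I_v1 -> R) (a : 'I_d -> R)
  (M2g : 'M[R]_(1 + v2)) :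
  (forall i, 0 < lambda i) -> Q1^T *m (const_mx 1 : 'cV[R]_v1) = 0 ->
  (forall i, row i Q1 != 0) -> prob_vec w -> prob_vec a ->
  feasible lambda g Q1 K (prod_design w a) -> ginv (M2 g a) M2g ->
  momM lambda g (prod_design w a)
    *m block_mx (invmx (M1 lambda w)) 0 0 ((\sum_(i < v1) lambda i * w i)^-1 *: M2g)
    *m Amat Q1 K = Amat Q1 K.
Proof.
move=> Hl HQ1 Hr Pw Pa Hf Hg.
have Hw := wpos Hr Pw Pa Hf.
have HD := M1_unit Hl Hw.
have Hc := csum_neq0 Hl Pw.
case: (Pa) => a0 a1.
have HQ2 : M2 g a *m M2g *m col_mx (0 : 'M[R]_(1, s2)) K = col_mx 0 K.
  case: (feas_decomp Hf) => Y.
  rewrite (prod_block _ _ _ a1) -(submxK Y) mulmx_block /Amat.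
  move=> /eq_block_mx [_ _ _ ->].
  rewrite /m2v -M2_e1 -!scalemxAl mulmxDr -scalemxAr !mulmxA.
  by rewrite Hg.
rewrite (prod_block _ _ _ a1) /Amat !mulmx_block ?mulmx0 ?mul0mx ?addr0 ?add0r.
have HQ2' : M2 g a *m (M2g *m col_mx (0 : 'M[R]_(1, s2)) K) = col_mx 0 K by rewrite mulmxA.
have HQ1' : (const_mx 1 : 'cV[R]_v1)^T *m Q1 = 0 by rewrite -(trmxK Q1) -trmx_mul HQ1 trmx0.
congr block_mx.
- by rewrite mulmxV // mul1mx.
- rewrite /m2v -M2_e1 trmx_mul M2_sym.
  move: (m1v lambda w) => m1.
  rewrite -scalemxAr -scalemxAl -!mulmxA HQ2' tr_col_mx mul_row_col trmx0 mulmx0 mul0mx addr0.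
  by rewrite !mulmx0 scaler0.
- rewrite /m1v trmx_mul /M1 tr_diag_mx.
  move: (m2v g a) => m2.
  rewrite -!mulmxA (mulmxA (diag_mx _)) mulmxV // mul1mx HQ1' mulmx0.
  by [].
- rewrite -scalemxAr -!scalemxAl scalerA mulrC mulfV // scale1r.
  by rewrite -mulmxA HQ2'.
Qed.
Lemma M2_blk (R : realType) v2 d (g : 'I_d -> 'cV[R]_v2) (a : 'I_d -> R) :
  \sum_k a k = 1 ->
  M2 g a = block_mx 1%:M (\sum_k a k *: g k)^T (\sum_k a k *: g k)
                    (\sum_k a k *: (g k *m (g k)^T)).
Proof.
move=> a1; rewrite /M2.
under eq_bigr => k _ do rewrite hh scale_block_mx.
rewrite sum_block sum_tr -scaler_suml a1 scale1r; congr block_mx.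
by apply: eq_bigr => k _; rewrite trZ.
Qed.

Lemma ginv_schur (R : realType) v2 d (g : 'I_d -> 'cV[R]_v2) (a : 'I_d -> R) (Sg : 'M[R]_v2) :
  \sum_k a k = 1 -> ginv (Smat g a) Sg ->
  let b := \sum_k a k *: g k in
  let Li := (block_mx 1%:M 0 (- b) 1%:M : 'M[R]_(1 + v2)) in
  ginv (M2 g a) (Li^T *m block_mx 1%:M 0 0 Sg *m Li).
Proof.
move=> a1 HS b Li.
set S := Smat g a.
set L := (block_mx 1%:M 0 b 1%:M : 'M[R]_(1 + v2)).
set Dm := (block_mx 1%:M 0 0 S : 'M[R]_(1 + v2)).
set Dg := (block_mx 1%:M 0 0 Sg : 'M[R]_(1 + v2)).
have HM2 : M2 g a = L *m Dm *m L^T.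
  rewrite (M2_blk _ a1) /L /Dm tr_block_mx !mulmx_block !trmx1 !trmx0.
  rewrite !mulmx0 !mul0mx !mulmx1 !mul1mx !addr0 !add0r.
  rewrite /S /Smat -/b addrC subrK; congr block_mx; exact: (esym (mul1mx _)).
have HL : Li *m L = 1%:M.
  rewrite /Li /L mulmx_block !mulmx0 !mul0mx !mulmx1 !mul1mx !addr0 !add0r.
  by rewrite addNr scalar_mx_block.
have HD : Dm *m Dg *m Dm = Dm.
  rewrite /Dm /Dg !mulmx_block ?mulmx0 ?mul0mx ?mulmx1 ?mul1mx ?addr0 ?add0r.
  by congr block_mx; [exact: mul0mx | exact: HS].
have E1 : L^T *m Li^T = 1%:M by rewrite -trmx_mul HL trmx1.
rewrite /ginv HM2.
clearbody L Dm Dg Li.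
have -> : L *m Dm *m L^T *m (Li^T *m Dg *m Li) = L *m Dm *m Dg *m Li.
  by rewrite !mulmxA -(mulmxA (L *m Dm)) E1 mulmx1.
rewrite !mulmxA -(mulmxA (L *m Dm *m Dg)) HL mulmx1 -!mulmxA.
by rewrite (mulmxA Dm Dg) (mulmxA (Dm *m Dg)) HD.
Qed.

Lemma trLi (R : realType) v2 (b : 'cV[R]_v2) :
  (block_mx 1%:M 0 (- b) 1%:M : 'M[R]_(1 + v2))^T = block_mx 1%:M (- b^T) 0 1%:M.
Proof.
rewrite tr_block_mx; congr block_mx; try exact: trmx1; try exact: trmx0.
by apply/matrixP => i j; rewrite !mxE.
Qed.

Lemma M2gQ2 (R : realType) v2 s2 (b : 'cV[R]_v2) (Sg : 'M[R]_v2) (K : 'M[R]_(v2, s2)) :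
  let Li := (block_mx 1%:M 0 (- b) 1%:M : 'M[R]_(1 + v2)) in
  Li^T *m block_mx 1%:M 0 0 Sg *m Li *m col_mx (0 : 'M[R]_(1, s2)) K =
  col_mx (- (b^T *m (Sg *m K))) (Sg *m K).
Proof.
move=> Li; rewrite /Li trLi -!mulmxA !mul_block_col.
rewrite !mulmx0 !mul0mx !mul1mx ?add0r ?addr0 ?mulNmx.
by [].
Qed.

Lemma Emat_mul (R : realType) v1 v2 d p (lambda : 'I_v1 -> R) (g : 'I_d -> 'cV[R]_v2)
  (xi : 'I_v1 -> 'I_d -> R) (X : 'M[R]_(1 + v2, p)) :
  Emat lambda g xi *m X =
  \sum_i delta_mx i 0 *m (lambda i *: \sum_k xi i k *: ((hvec g k)^T *m X)).
Proof.
rewrite /Emat mulmx_suml; apply: eq_bigr => i _.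
rewrite mulmx_suml scaler_sumr mulmx_sumr; apply: eq_bigr => k _.
by rewrite -scalemxAl -mulmxA !scalemxAr scalerA mulrC.
Qed.

Lemma hN (R : realType) v2 d s2 (g : 'I_d -> 'cV[R]_v2) k (t : 'M[R]_(1, s2)) (z : 'M[R]_(v2, s2)) :
  (hvec g k)^T *m col_mx (- t) z = (g k)^T *m z - t.
Proof. by rewrite /hvec tr_col_mx mul_row_col const1 trmx1 mul1mx addrC. Qed.

Lemma delta_sum_entry (R : realType) v1 p (Y : 'I_v1 -> 'M[R]_(1, p)) j c :
  (\sum_i delta_mx i 0 *m Y i) j c = Y j 0 c.
Proof.
rewrite summxE (bigD1 j) //= big1 ?addr0.
  by rewrite mxE big_ord1 mxE !eqxx mul1r.
by move=> i /negPf H; rewrite mxE big_ord1 mxE eq_sym H mul0r.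
Qed.

Lemma Cmat_eq (R : realType) v1 v2 d (g : 'I_d -> 'cV[R]_v2) (xi : 'I_v1 -> 'I_d -> R)
  (w : 'I_v1 -> R) (a : 'I_d -> R) :
  \matrix_(i < v1, r < v2) (\sum_(k < d) (xi i k - w i * a k) * g k r ord0) =
  \sum_i delta_mx i 0 *m (\sum_k (xi i k - w i * a k) *: (g k)^T).
Proof.
apply/matrixP => i r; rewrite delta_sum_entry !mxE summxE.
by apply: eq_bigr => k _; rewrite !mxE.
Qed.

Lemma rowv_eq (R : realType) v2 d s2 (g : 'I_d -> 'cV[R]_v2) (x : 'I_d -> R)
  (wi : R) (a : 'I_d -> R) (z : 'M[R]_(v2, s2)) :
  \sum_k x k = wi ->
  \sum_k x k *: ((g k)^T *m z - (\sum_k a k *: g k)^T *m z) =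
  (\sum_k (x k - wi * a k) *: (g k)^T) *m z.
Proof.
move=> Hx.
have HT : (\sum_k a k *: g k)^T *m z = \sum_k a k *: ((g k)^T *m z).
  by rewrite sum_tr mulmx_suml; apply: eq_bigr => k _; rewrite trZ scalemxAl.
rewrite HT; set T := \sum_k a k *: ((g k)^T *m z).
transitivity (\sum_k x k *: ((g k)^T *m z) - wi *: T).
  by rewrite -Hx scaler_suml -sumrB; apply: eq_bigr => k _; rewrite scalerBr.
rewrite mulmx_suml /T scaler_sumr -sumrB; apply: eq_bigr => k _.
by rewrite -scalemxAl scalerBl scalerA.
Qed.

Lemma Fmat_mul (R : realType) v1 v2 d s2 (lambda : 'I_v1 -> R) (g : 'I_d -> 'cV[R]_v2)
  (xi : 'I_v1 -> 'I_d -> R) (b : 'cV[R]_v2) (z : 'M[R]_(v2, s2)) :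
  Fmat lambda g xi *m col_mx (- (b^T *m z)) z =
  col_mx (\sum_i lambda i *: \sum_k xi i k *: ((g k)^T *m z - b^T *m z))
    ((\sum_(i < v1) \sum_(k < d) (lambda i * xi i k) *: (g k *m (g k)^T)
      - (\sum_(i < v1) \sum_(k < d) (lambda i * xi i k) *: g k) *m b^T) *m z).
Proof.
rewrite /Fmat mulmx_suml.
under eq_bigr => i _ do rewrite mulmx_suml.
under eq_bigr => i _ do under eq_bigr => k _ do
  rewrite -scalemxAl -mulmxA hN /hvec mul_col_mx const1 mul1mx scale_col_mx.
under eq_bigr => i _ do rewrite sum_col.
rewrite sum_col; congr col_mx.
  apply: eq_bigr => i _; rewrite scaler_sumr; apply: eq_bigr => k _.
  by rewrite scalerA mulrC.
rewrite mulmxBl !mulmx_suml -sumrB; apply: eq_bigr => i _.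
rewrite !mulmx_suml -sumrB; apply: eq_bigr => k _.
rewrite -!scalemxAl -scalerBr mulrC; congr (_ *: _).
by rewrite mulmxBr !mulmxA.
Qed.

Lemma ET_Dinv (R : realType) v1 v2 d s1 (lambda : 'I_v1 -> R) (g : 'I_d -> 'cV[R]_v2)
  (xi : 'I_v1 -> 'I_d -> R) (w : 'I_v1 -> R) (Q1 : 'M[R]_(v1, s1)) :
  (forall i, 0 < lambda i) -> (forall i, 0 < w i) ->
  (forall i, marg_treat xi i = w i) ->
  Q1^T *m (const_mx 1 : 'cV[R]_v1) = 0 ->
  (\matrix_(r < v2, i < v1) ((w i)^-1 * \sum_(k < d) xi i k * g k r ord0)) *m Q1 = 0 ->
  (Emat lambda g xi)^T *m invmx (M1 lambda w) *m Q1 = 0.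
Proof.
move=> Hl Hw Hm HQ1 HB.
set Z := \sum_i \sum_k (xi i k / w i) *: (hvec g k *m (delta_mx i 0)^T).
have dM : forall i, (delta_mx i 0 : 'cV[R]_v1)^T *m M1 lambda w = (lambda i * w i) *: (delta_mx i 0)^T.
  move=> i; apply/matrixP => r c; rewrite /M1 mul_mx_diag !mxE.
  by rewrite mulrC; case: eqP => [->|]; rewrite ?mulr0.
have HZ : (Emat lambda g xi)^T = Z *m M1 lambda w.
  rewrite /Emat /Z sum_tr mulmx_suml; apply: eq_bigr => i _.
  rewrite sum_tr mulmx_suml; apply: eq_bigr => k _.
  rewrite trZ trmx_mul trmxK -scalemxAl -mulmxA dM -scalemxAr scalerA.
  congr (_ *: _); have := Hw i; rewrite lt0r => /andP [wn _]; by field.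
have HZ2 : Z = col_mx (const_mx 1) (\matrix_(r < v2, i < v1) ((w i)^-1 * \sum_(k < d) xi i k * g k r ord0)).
  rewrite /Z.
  under eq_bigr => i _ do under eq_bigr => k _ do
    rewrite /hvec mul_col_mx const1 mul1mx scale_col_mx.
  under eq_bigr => i _ do rewrite sum_col.
  rewrite sum_col; congr col_mx.
    apply/matrixP => r j; rewrite !mxE summxE (bigD1 j) //= [X in _ + X]big1 ?addr0.
      rewrite summxE -(Hm j) /marg_treat.
      have := Hw j; rewrite -(Hm j) lt0r => /andP [wn _].
      rewrite (ord1 r).
      under eq_bigr => k _ do rewrite !mxE !eqxx /= mulr1.
      by rewrite -mulr_suml mulfV.
    move=> i /negPf H; rewrite summxE; apply: big1 => k _.
    by rewrite !mxE eq_sym H mulr0.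
  apply/matrixP => r j; rewrite !mxE summxE (bigD1 j) //= [X in _ + X]big1 ?addr0.
    rewrite summxE mulr_sumr; apply: eq_bigr => k _.
    rewrite !mxE big_ord1 !mxE !eqxx /= mulr1; ring.
  move=> i /negPf H; rewrite summxE; apply: big1 => k _.
  by rewrite !mxE big_ord1 !mxE eq_sym H /= !mulr0.
rewrite HZ -(mulmxA Z) mulmxV ?mulmx1; last exact: M1_unit.
rewrite HZ2 mul_col_mx HB.
have -> : (const_mx 1 : 'M[R]_(1, v1)) *m Q1 = 0.
  apply: (can_inj (@trmxK _ _ _)); rewrite trmx_mul trmx0 -HQ1.
  by congr (_ *m _); apply/matrixP => i j; rewrite !mxE.
exact: col_mx0.
Qed.

Lemma xi_GA (R : realType) v1 v2 d s1 s2 (lambda : 'I_v1 -> R) (g : 'I_d -> 'cV[R]_v2)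
  (Q1 : 'M[R]_(v1, s1)) (K : 'M[R]_(v2, s2)) (w : 'I_v1 -> R) (a : 'I_d -> R)
  (Sg : 'M[R]_v2) (xi : 'I_v1 -> 'I_d -> R) :
  (forall i, 0 < lambda i) -> (forall i, 0 < w i) ->
  Q1^T *m (const_mx 1 : 'cV[R]_v1) = 0 ->
  (forall i, marg_treat xi i = w i) ->
  (\matrix_(r < v2, i < v1) ((w i)^-1 * \sum_(k < d) xi i k * g k r ord0)) *m Q1 = 0 ->
  (\matrix_(i < v1, r < v2)
        (\sum_(k < d) (xi i k - w i * a k) * g k r ord0)) *m Sg *m K = 0 ->
  ((\sum_(i < v1) lambda i * w i)^-1 *:
        (\sum_(i < v1) \sum_(k < d) (lambda i * xi i k) *: (g k *m (g k)^T)
         - (\sum_(i < v1) \sum_(k < d) (lambda i * xi i k) *: g k)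
             *m (\sum_(k < d) a k *: g k)^T)) *m Sg *m K = K ->
  let b := \sum_k a k *: g k in
  let Li := (block_mx 1%:M 0 (- b) 1%:M : 'M[R]_(1 + v2)) in
  momM lambda g xi
    *m block_mx (invmx (M1 lambda w)) 0 0
         ((\sum_(i < v1) lambda i * w i)^-1 *: (Li^T *m block_mx 1%:M 0 0 Sg *m Li))
    *m Amat Q1 K = Amat Q1 K.
Proof.
move=> Hl Hw HQ1 Hm HB HC HDd b Li.
have HM1 : M1 lambda (marg_treat xi) = M1 lambda w.
  by apply/matrixP => i j; rewrite /M1 !mxE Hm.
have HN := M2gQ2 b Sg K; rewrite -/Li in HN.
set z := Sg *m K.
have Yi0 : forall i, (\sum_k (xi i k - w i * a k) *: (g k)^T) *m z = 0.
  move=> i; apply/matrixP => r c.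
  move: HC; rewrite Cmat_eq -mulmxA mulmx_suml -/z => /matrixP /(_ i c).
  rewrite (eq_bigr (fun i => delta_mx i 0 *m ((\sum_k (xi i k - w i * a k) *: (g k)^T) *m z))); last first.
    by move=> j _; rewrite mulmxA.
  by rewrite delta_sum_entry [r]ord1 !mxE.
have HEN : Emat lambda g xi *m col_mx (- (b^T *m z)) z = 0.
  rewrite Emat_mul; apply: big1 => i _.
  under eq_bigr => k _ do rewrite hN.
  by rewrite (@rowv_eq _ _ _ _ g (xi i) (w i)); last exact: Hm; rewrite Yi0 scaler0 mulmx0.
rewrite momM_block HM1 /Amat !mulmx_block ?mulmx0 ?mul0mx ?addr0 ?add0r.
congr block_mx.
- by rewrite mulmxV ?mul1mx //; exact: M1_unit.
- by rewrite -scalemxAr -scalemxAl -(mulmxA (Emat lambda g xi)) HN HEN scaler0.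
- exact: (ET_Dinv Hl Hw Hm HQ1 HB).
- rewrite -scalemxAr -scalemxAl -(mulmxA (Fmat lambda g xi)) HN Fmat_mul scale_col_mx.
  congr col_mx.
    rewrite [X in _ *: X]big1 ?scaler0 // => i _.
    by rewrite (@rowv_eq _ _ _ _ g (xi i) (w i)); last exact: Hm; rewrite Yi0 scaler0.
  by rewrite scalemxAl mulmxA.
Qed.

Unset Implicit Arguments.

Theorem theorem3 (R : realType) (v1 v2 d s1 s2 : nat)
  (lambda : 'I_v1 -> R) (g : 'I_d -> 'cV[R]_v2)
  (Q1 : 'M[R]_(v1, s1)) (K : 'M[R]_(v2, s2))
  (Phi : 'M[R]_(s1 + s2) -> R) (wst : 'I_v1 -> R) (ast : 'I_d -> R) :
  (forall i, 0 < lambda i) ->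
  \rank Q1 = s1 ->
  Q1^T *m (const_mx 1 : 'cV[R]_v1) = 0 ->
  (forall i, row i Q1 != 0) ->
  \rank K = s2 ->
  information_function Phi ->
  eigenvalue_based Phi ->
  prob_vec wst -> prob_vec ast ->
  Phi_optimal lambda g Q1 K Phi (prod_design wst ast) ->
  (forall (M2g : 'M[R]_(1 + v2)) (xi : 'I_v1 -> 'I_d -> R),
     ginv (M2 g ast) M2g ->
     design xi ->
     momM lambda g xi
       *m block_mx (invmx (M1 lambda wst)) 0 0
            ((\sum_(i < v1) lambda i * wst i)^-1 *: M2g)
       *m Amat Q1 K = Amat Q1 K ->
     Phi_optimal lambda g Q1 K Phi xi)
  /\
  (forall (Sg : 'M[R]_v2) (xi : 'I_v1 -> 'I_d -> R),
     ginv (Smat g ast) Sg ->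
     design xi ->
     (* (a) *)
     (forall i, marg_treat xi i = wst i) ->
     (* (b) *)
     (\matrix_(r < v2, i < v1)
        ((wst i)^-1 * \sum_(k < d) xi i k * g k r ord0)) *m Q1 = 0 ->
     (* (c) *)
     (\matrix_(i < v1, r < v2)
        (\sum_(k < d) (xi i k - wst i * ast k) * g k r ord0)) *m Sg *m K = 0 ->
     (* (d) *)
     ((\sum_(i < v1) lambda i * wst i)^-1 *:
        (\sum_(i < v1) \sum_(k < d) (lambda i * xi i k) *: (g k *m (g k)^T)
         - (\sum_(i < v1) \sum_(k < d) (lambda i * xi i k) *: g k)
             *m (\sum_(k < d) ast k *: g k)^T)) *m Sg *m K = K ->
     Phi_optimal lambda g Q1 K Phi xi).

Proof.
move=> Hl _ HQ1 Hr _ _ _ Pw Pa Hopt.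
have [Ds Fs Os] := Hopt.
have Hw := wpos Hr Pw Pa Fs.
case: (Pa) => a0 a1.
split.
- move=> M2g xi Hg Dx HGA.
  apply: (opt_transfer Hopt Dx HGA).
  exact: prod_GA.
- move=> Sg xi HS Dx Ha Hb Hc Hd.
  have Hg := ginv_schur a1 HS.
  apply: (opt_transfer Hopt Dx (xi_GA Hl Hw HQ1 Ha Hb Hc Hd)).
  exact: prod_GA.
Qed.
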